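(* Let $S_1,S_2\subseteq\Omega=\{0,\dots,D-1\}$ be nonempty sets with resemblance $R=\frac{|S_1\cap S_2|}{|S_1\cup S_2|}$, and fix integers $b\ge1$, $k\ge1$, $m\ge1$. Apply $k$ independent uniformly random permutations $\pi_1,\dots,\pi_k$ of $\Omega$; for each $j$ record the lowest $b$ bits of $\min\pi_j(S_1)$ and of $\min\pi_j(S_2)$, and let $T$ be the number of $j\in\{1,\dots,k\}$ for which these $b$-bit values coincide, so that $T$ is Binomial$(k,P_b)$ where $P_b$ is the probability that the lowest $b$ bits of $\min\pi(S_1)$ and $\min\pi(S_2)$ agree. Assume $P_b=C_{1,b}+(1-C_{2,b})R$ with $C_{2,b}\ne1$, where $r_1=|S_1|/D$, $r_2=|S_2|/D$, $A_{l,b}=\frac{r_l(1-r_l)^{2^b-1}}{1-(1-r_l)^{2^b}}$ ($l=1,2$), $C_{1,b}=A_{1,b}\frac{r_2}{r_1+r_2}+A_{2,b}\frac{r_1}{r_1+r_2}$, $C_{2,b}=A_{1,b}\frac{r_1}{r_1+r_2}+A_{2,b}\frac{r_2}{r_1+r_2}$. Expand the $b$-bit values of $S_1$ (resp. $S_2$) into a binary vector $x_1$ (resp. $x_2$) of length $2^bk$ consisting of $k$ consecutive blocks of length $2^b$, where block $j$ is the indicator vector of the $b$-bit value obtained from $\pi_j$; thus each $x_l$ has exactly $k$ ones and $\langle x_1,x_2\rangle=T$. Apply to $x_1,x_2$ the VW hashing with $m$ buckets and $s=1$, independently of the permutations: with i.i.d. uniform $h(i)\in\{1,\dots,m\}$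 and i.i.d. $r_i$ uniform on $\{-1,1\}$, set $g_{l,q}=\sum_i x_{l,i}r_i1\{h(i)=q\}$, $\hat T=\sum_{q=1}^m g_{1,q}g_{2,q}$, and $$\hat R_{b,vw}=\frac{\hat T/k-C_{1,b}}{1-C_{2,b}}.$$ Then $E(\hat R_{b,vw})=R$ and $$\mathrm{Var}(\hat R_{b,vw})=\frac1k\frac{P_b(1-P_b)}{[1-C_{2,b}]^2}+\frac1m\frac{1}{[1-C_{2,b}]^2}\left(1+P_b^2-\frac{P_b(1+P_b)}{k}\right).$$
   Context: The first term $\frac1k\frac{P_b(1-P_b)}{[1-C_{2,b}]^2}$ is the variance of the $b$-bit minwise hashing estimator $\hat R_b=\frac{T/k-C_{1,b}}{1-C_{2,b}}$. The relation $P_b=C_{1,b}+(1-C_{2,b})R$ is the (large-$D$) expression for the $b$-bit collision probability used throughout the paper. *)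

(* Defs.v *)
From mathcomp Require Import all_boot all_order all_algebra all_fingroup.
Set Implicit Arguments. Unset Strict Implicit. Unset Printing Implicit Defensive.
Import Order.TTheory GRing.Theory Num.Theory.
Local Open Scope ring_scope.

Section Defs.
Variable R : realFieldType.

Definition Eu (T : finType) (X : T -> R) : R := (\sum_(w : T) X w) / #|T|%:R.
Definition Varu (T : finType) (X : T -> R) : R := Eu (fun w => (X w - Eu X) ^+ 2).

Definition minperm (D : nat) (pi : {perm 'I_D}) (S : {set 'I_D}) : nat :=
  \big[minn/D]_(i in S) val (pi i).

Definition lowbits (b v : nat) : nat := (v %% 2 ^ b)%N.

Definition Pb (D b : nat) (S1 S2 : {set 'I_D}) : R :=
  Eu (fun pi : {perm 'I_D} =>
        (lowbits b (minperm pi S1) == lowbits b (minperm pi S2))%:R).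

Definition resemblance (D : nat) (S1 S2 : {set 'I_D}) : R :=
  #|S1 :&: S2|%:R / #|S1 :|: S2|%:R.

Definition Alb (b : nat) (r : R) : R :=
  r * (1 - r) ^+ (2 ^ b - 1) / (1 - (1 - r) ^+ (2 ^ b)).

Definition C1b (b : nat) (r1 r2 : R) : R :=
  Alb b r1 * (r2 / (r1 + r2)) + Alb b r2 * (r1 / (r1 + r2)).
Definition C2b (b : nat) (r1 r2 : R) : R :=
  Alb b r1 * (r1 / (r1 + r2)) + Alb b r2 * (r2 / (r1 + r2)).

(* sample space: k permutations, hash h : coordinates -> buckets, signs r *)
Definition Omega (D b k m : nat) : finType :=
  ({ffun 'I_k -> {perm 'I_D}} * {ffun 'I_(2 ^ b * k) -> 'I_m}
     * {ffun 'I_(2 ^ b * k) -> bool})%type.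

Definition xvec (D b k : nat) (pis : {ffun 'I_k -> {perm 'I_D}}) (S : {set 'I_D})
  (i : 'I_(2 ^ b * k)) : R :=
  [exists j : 'I_k, nat_of_ord i == (j * 2 ^ b + lowbits b (minperm (pis j) S))%N]%:R.

Definition sgn (x : bool) : R := (-1) ^+ x.

Definition gvw (D b k m : nat) (w : Omega D b k m) (S : {set 'I_D}) (q : 'I_m) : R :=
  \sum_(i < 2 ^ b * k) xvec w.1.1 S i * sgn (w.2 i) * (w.1.2 i == q)%:R.

Definition That (D b k m : nat) (S1 S2 : {set 'I_D}) (w : Omega D b k m) : R :=
  \sum_(q < m) gvw w S1 q * gvw w S2 q.

Definition Rhat_vw (D b k m : nat) (S1 S2 : {set 'I_D}) (w : Omega D b k m) : R :=
  let r1 := #|S1|%:R / D%:R in let r2 := #|S2|%:R / D%:R in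
  (That S1 S2 w / k%:R - C1b b r1 r2) / (1 - C2b b r1 r2).

End Defs.

(* Main.v *)
Require Import Defs.
From mathcomp Require Import all_boot all_order all_algebra all_fingroup.
From mathcomp Require Import ring lra zify.
Set Implicit Arguments. Unset Strict Implicit. Unset Printing Implicit Defensive.
Import Order.TTheory GRing.Theory Num.Theory.
Local Open Scope ring_scope.

Section Gen.
Variable R : realFieldType.

Lemma card_pos (T : finType) (x : T) : (0 < #|T|)%N.
Proof. by apply/card_gt0P; exists x. Qed.

Lemma EuD (T : finType) (f g : T -> R) : Eu (fun w => f w + g w) = Eu f + Eu g.
Proof. by rewrite /Eu big_split mulrDl. Qed.
Lemma EuZ (T : finType) (c : R) (f : T -> R) : Eu (fun w => c * f w) = c * Eu f.
Proof. by rewrite /Eu -mulr_sumr mulrA. Qed.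
Lemma Eu_sum (T I : finType) (f : I -> T -> R) :
  Eu (fun w => \sum_i f i w) = \sum_i Eu (f i).
Proof. by rewrite /Eu exchange_big /= mulr_suml. Qed.
Lemma Eu_ext (T : finType) (f g : T -> R) : f =1 g -> Eu f = Eu g.
Proof. by move=> e; rewrite /Eu (eq_bigr _ (fun w _ => e w)). Qed.
Lemma Eu_const (T : finType) (c : R) : (0 < #|T|)%N -> Eu (fun _ : T => c) = c.
Proof.
move=> h; rewrite /Eu sumr_const -[c *+ _]mulr_natr; apply: mulfK.
by rewrite pnatr_eq0 -lt0n.
Qed.

Lemma Eu_pair (A B : finType) (F : A * B -> R) :
  Eu F = Eu (fun a => Eu (fun b => F (a, b))).
Proof.
rewrite /Eu card_prod natrM invfM.
rewrite (eq_bigr (fun w => F (w.1, w.2))); last by case.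
rewrite -(pair_bigA _ (fun a b => F (a, b))) /= [RHS]mulr_suml [LHS]mulr_suml.
apply: eq_bigr => a _; rewrite -!mulrA; congr (_ * _); by rewrite mulrC.
Qed.

Lemma Eu_prod (I J : finType) (F : I -> J -> R) :
  Eu (fun h : {ffun I -> J} => \prod_t F t (h t)) = \prod_t Eu (F t).
Proof.
rewrite /Eu -bigA_distr_bigA card_ffun natrX big_split /= prodr_const.
by rewrite exprVn.
Qed.

Lemma Varu_aff (T : finType) (a c : R) (f : T -> R) (hT : (0 < #|T|)%N) :
  Varu (fun w => a * f w + c) = a ^+ 2 * (Eu (fun w => f w ^+ 2) - Eu f ^+ 2).
Proof.
rewrite /Varu EuD EuZ Eu_const //.
rewrite (@Eu_ext _ _ (fun w => a ^+ 2 * f w ^+ 2 + (- (2 * a ^+ 2 * Eu f)) * f w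
   + a ^+ 2 * Eu f ^+ 2)); last by move=> w; ring.
rewrite !EuD !EuZ Eu_const //.
change ((\sum_w f w) / #|T|%:R) with (Eu f); ring.
Qed.

Lemma Eu_aff (T : finType) (a c : R) (f : T -> R) (hT : (0 < #|T|)%N) :
  Eu (fun w => a * f w + c) = a * Eu f + c.
Proof. by rewrite EuD EuZ Eu_const. Qed.


Lemma Eu_marg1 (I J : finType) (hJ : (0 < #|J|)%N) (j : I) (f : J -> R) :
  Eu (fun h : {ffun I -> J} => f (h j)) = Eu f.
Proof.
rewrite (@Eu_ext _ _ (fun h : {ffun I -> J} =>
   \prod_t (if t == j then f else fun _ => 1) (h t))).
  rewrite (Eu_prod (fun t => if t == j then f else fun _ => 1)).
  rewrite (bigD1 j) //= eqxx big1 ?mulr1 // => t /negbTE ->.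
  exact: Eu_const.
by move=> h; rewrite (bigD1 j) //= eqxx big1 ?mulr1 // => t /negbTE ->.
Qed.

Lemma Eu_marg2 (I J : finType) (hJ : (0 < #|J|)%N) (j j' : I) (f g : J -> R) :
  j != j' -> Eu (fun h : {ffun I -> J} => f (h j) * g (h j')) = Eu f * Eu g.
Proof.
move=> hjj; have hj'j : j' != j by rewrite eq_sym.
rewrite (@Eu_ext _ _ (fun h : {ffun I -> J} =>
   \prod_t (if t == j then f else if t == j' then g else fun _ => 1) (h t))).
  rewrite (Eu_prod (fun t => if t == j then f else if t == j' then g else fun _ => 1)).
  rewrite (bigD1 j) //= eqxx (bigD1 j') //= (negbTE hj'j) eqxx.
  rewrite big1 ?mulr1 // => t /andP[/negbTE -> /negbTE ->]; exact: Eu_const.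
move=> h; rewrite (bigD1 j) //= eqxx (bigD1 j') //= (negbTE hj'j) eqxx.
by rewrite big1 ?mulr1 // => t /andP[/negbTE -> /negbTE ->].
Qed.

Definition flip (I : finType) (t : I) (s : {ffun I -> bool}) : {ffun I -> bool} :=
  [ffun u => if u == t then ~~ s u else s u].

Lemma flipK (I : finType) (t : I) : involutive (@flip I t).
Proof.
move=> s; apply/ffunP => u; rewrite !ffunE; case: (u == t) => //=; exact: negbK.
Qed.

Lemma sgnN (x : bool) : sgn R (~~ x) = - sgn R x.
Proof. by case: x; rewrite /sgn /= ?expr0 ?expr1 ?opprK. Qed.

Lemma sgn2 (x : bool) : sgn R x * sgn R x = 1.
Proof. by case: x; rewrite /sgn /= ?expr0 ?expr1 ?mulr1 ?mulrNN ?mulr1. Qed.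

Lemma sgn_flip (I : finType) (t u : I) s :
  sgn R (flip t s u) = if u == t then - sgn R (s u) else sgn R (s u).
Proof. by rewrite ffunE; case: (u == t); rewrite ?sgnN. Qed.

Lemma Eu_flip0 (I : finType) (t : I) (F : {ffun I -> bool} -> R) :
  (forall s, F (flip t s) = - F s) -> Eu F = 0.
Proof.
move=> h.
have e : \sum_s F s = \sum_s F (flip t s) := reindex_inj (can_inj (flipK t)).
rewrite (eq_bigr _ (fun s _ => h s)) sumrN in e.
have e0 : \sum_s F s = 0 by lra.
by rewrite /Eu e0 mul0r.
Qed.

Lemma card_ffb (I : finType) : (0 < #|{ffun I -> bool}|)%N.
Proof. exact: card_pos [ffun _ => false]. Qed.

Lemma ES2 (I : finType) (i j : I) :
  Eu (fun s : {ffun I -> bool} => sgn R (s i) * sgn R (s j)) = (i == j)%:R.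
Proof.
case: (eqVneq i j) => [<-|hij].
  by rewrite (@Eu_ext _ _ (fun _ => 1)) ?Eu_const ?card_ffb // => s; rewrite sgn2.
have hji : j != i by rewrite eq_sym.
apply: (Eu_flip0 (t := i)) => s.
by rewrite !sgn_flip eqxx (negbTE hji) mulNr.
Qed.

Lemma ES4 (I : finType) (i j k l : I) :
  Eu (fun s : {ffun I -> bool} =>
     sgn R (s i) * sgn R (s j) * (sgn R (s k) * sgn R (s l))) =
  (i == j)%:R * (k == l)%:R
  + (i != j)%:R * ((i == k)%:R * (j == l)%:R + (i == l)%:R * (j == k)%:R).
Proof.
have pos := card_ffb I.
case: (eqVneq i j) => [<-|hij].
  rewrite mul1r mul0r addr0 -(ES2 k l); apply: Eu_ext => s.
  by rewrite sgn2 mul1r.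
have hji : j != i by rewrite eq_sym.
rewrite mul0r add0r mul1r.
case: (eqVneq i k) => [<-|hik].
  case: (eqVneq j l) => [<-|hjl].
    rewrite (@Eu_ext _ _ (fun _ => 1)) ?Eu_const //.
      by rewrite ?(negbTE hji) /=; ring.
    by move=> s; rewrite mulrACA !sgn2 mulr1.
  have hlj : l != j by rewrite eq_sym.
  rewrite [RHS](_ : _ = 0); last by rewrite ?(negbTE hji) /=; ring.
  apply: (Eu_flip0 (t := j)) => s.
  rewrite !sgn_flip eqxx (negbTE hij) (negbTE hlj); ring.
have hki : k != i by rewrite eq_sym.
case: (eqVneq i l) => [<-|hil].
  case: (eqVneq j k) => [<-|hjk].
    rewrite (@Eu_ext _ _ (fun _ => 1)) ?Eu_const //.
      by rewrite ?(negbTE hik) /=; ring.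
    by move=> s; rewrite [sgn R (s j) * _]mulrC mulrACA !sgn2 mulr1.
  have hkj : k != j by rewrite eq_sym.
  rewrite [RHS](_ : _ = 0); last by rewrite ?(negbTE hik) /=; ring.
  apply: (Eu_flip0 (t := j)) => s.
  rewrite !sgn_flip eqxx (negbTE hij) (negbTE hkj); ring.
have hli : l != i by rewrite eq_sym.
rewrite [RHS](_ : _ = 0); last by rewrite /=; ring.
apply: (Eu_flip0 (t := i)) => s.
rewrite !sgn_flip eqxx (negbTE hji) (negbTE hki) (negbTE hli); ring.
Qed.


Lemma sum_delta (I : finType) (i : I) (F : I -> R) :
  \sum_k (i == k)%:R * F k = F i.
Proof.
rewrite (bigD1 i) //= eqxx mul1r big1 ?addr0 // => k hk.
by rewrite eq_sym (negbTE hk) mul0r.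
Qed.

Lemma ES_lin (I : finType) (u : I -> I -> R) :
  Eu (fun s : {ffun I -> bool} =>
        \sum_i \sum_j u i j * (sgn R (s i) * sgn R (s j))) = \sum_i u i i.
Proof.
rewrite Eu_sum; apply: eq_bigr => i _; rewrite Eu_sum.
rewrite (eq_bigr (fun j => (i == j)%:R * u i j)) ?sum_delta //.
by move=> j _; rewrite EuZ ES2 mulrC.
Qed.

Lemma ES_sq (I : finType) (u : I -> I -> R) :
  Eu (fun s : {ffun I -> bool} =>
        (\sum_i \sum_j u i j * (sgn R (s i) * sgn R (s j))) ^+ 2) =
  (\sum_i u i i) ^+ 2
  + \sum_i \sum_j (i != j)%:R * (u i j * u i j + u i j * u j i).
Proof.
set S := \sum_i u i i.
rewrite (@Eu_ext _ _ (fun s : {ffun I -> bool} => \sum_i \sum_j \sum_k \sum_l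
    u i j * u k l * (sgn R (s i) * sgn R (s j) * (sgn R (s k) * sgn R (s l))))); last first.
  move=> s; rewrite expr2 mulr_suml; apply: eq_bigr => i _.
  rewrite mulr_suml; apply: eq_bigr => j _.
  rewrite mulr_sumr; apply: eq_bigr => k _.
  rewrite mulr_sumr; apply: eq_bigr => l _; ring.
rewrite Eu_sum expr2 {1}/S mulr_suml -big_split /=; apply: eq_bigr => i _.
have -> : u i i * S = \sum_j (u i j * (i == j)%:R) * S.
  by rewrite -mulr_suml (eq_bigr (fun j => (i == j)%:R * u i j)) ?sum_delta // => j _; rewrite mulrC.
rewrite Eu_sum -big_split /=; apply: eq_bigr => j _.
rewrite Eu_sum.
rewrite (eq_bigr (fun k => (u i j * (i == j)%:R) * (\sum_l (k == l)%:R * u k l)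
   + ((i != j)%:R * u i j) * (\sum_l (i == k)%:R * ((j == l)%:R * u k l))
   + ((i != j)%:R * u i j) * (\sum_l (j == k)%:R * ((i == l)%:R * u k l)))); last first.
  move=> k _; rewrite Eu_sum !mulr_sumr -!big_split /=; apply: eq_bigr => l _.
  rewrite EuZ ES4; ring.
have h1 : \sum_k \sum_l (k == l)%:R * u k l = S.
  by apply: eq_bigr => k _; rewrite sum_delta.
have h2 : \sum_k \sum_l (i == k)%:R * ((j == l)%:R * u k l) = u i j.
  rewrite (eq_bigr (fun k => (i == k)%:R * u k j)) ?sum_delta // => k _.
  by rewrite -mulr_sumr sum_delta.
have h3 : \sum_k \sum_l (j == k)%:R * ((i == l)%:R * u k l) = u j i.
  rewrite (eq_bigr (fun k => (j == k)%:R * u k i)) ?sum_delta // => k _.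
  by rewrite -mulr_sumr sum_delta.
rewrite !big_split /= -(mulr_sumr _ _ _ (u i j * _)) -!(mulr_sumr _ _ _ ((i != j)%:R * u i j)).
rewrite h1 h2 h3; ring.
Qed.


Lemma EH (I : finType) (m : nat) (hm : (0 < m)%N) (i j : I) : i != j ->
  Eu (fun h : {ffun I -> 'I_m} => ((h i == h j) : bool)%:R) = m%:R^-1 :> R.
Proof.
move=> hij.
have pos : (0 < #|'I_m|)%N by rewrite card_ord.
have Ef : forall q : 'I_m, Eu (fun y : 'I_m => (y == q)%:R) = m%:R^-1 :> R.
  move=> q; rewrite /Eu card_ord (eq_bigr (fun y => (q == y)%:R * 1)).
    by rewrite sum_delta mul1r.
  by move=> y _; rewrite mulr1 eq_sym.
rewrite (@Eu_ext _ _ (fun h : {ffun I -> 'I_m} =>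
   \sum_q ((h i == q)%:R * (h j == q)%:R))); last first.
  move=> h; rewrite (bigD1 (h i)) //= eqxx mul1r big1 ?addr0 ?(eq_sym (h j)) //.
  by move=> q hq; rewrite eq_sym (negbTE hq) mul0r.
rewrite Eu_sum (eq_bigr (fun _ => m%:R^-1 * m%:R^-1)); last first.
  move=> q _; rewrite (@Eu_marg2 I _ pos i j (fun y => (y == q)%:R) (fun y => (y == q)%:R) hij) //.
  by rewrite Ef.
have hm0 : m%:R != 0 :> R by rewrite pnatr_eq0 -lt0n.
rewrite sumr_const card_ord -[_ *+ m]mulr_natr; field; exact: hm0.
Qed.

Lemma offdiag (I : finType) (f : I -> I -> R) :
  \sum_i \sum_j (i != j)%:R * f i j = \sum_i \sum_j f i j - \sum_i f i i.
Proof.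
rewrite -sumrB; apply: eq_bigr => i _.
rewrite (eq_bigr (fun j => f i j - (i == j)%:R * f i j)); last first.
  by move=> j _; case: (i == j) => /=; ring.
by rewrite sumrB sum_delta.
Qed.

Definition cc (I : finType) (m : nat) (h : {ffun I -> 'I_m}) (i j : I) : R :=
  ((h i == h j) : bool)%:R.

Lemma EHS1 (I : finType) (m : nat) (hm : (0 < m)%N) (a b : I -> R) :
  Eu (fun h : {ffun I -> 'I_m} => Eu (fun s : {ffun I -> bool} =>
      \sum_i \sum_j (a i * b j * cc h i j) * (sgn R (s i) * sgn R (s j))))
  = \sum_i a i * b i.
Proof.
have pos : (0 < #|{ffun I -> 'I_m}|)%N by apply: card_pos [ffun _ => Ordinal hm].
rewrite (@Eu_ext _ _ (fun _ => \sum_i a i * b i)) ?Eu_const // => h.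
rewrite ES_lin; apply: eq_bigr => i _; by rewrite /cc eqxx mulr1.
Qed.

Lemma EHS2 (I : finType) (m : nat) (hm : (0 < m)%N) (a b : I -> R) :
  Eu (fun h : {ffun I -> 'I_m} => Eu (fun s : {ffun I -> bool} =>
      (\sum_i \sum_j (a i * b j * cc h i j) * (sgn R (s i) * sgn R (s j))) ^+ 2))
  = (\sum_i a i * b i) ^+ 2
    + m%:R^-1 * \sum_i \sum_j (i != j)%:R * (a i ^+ 2 * b j ^+ 2 + a i * b i * (a j * b j)).
Proof.
have pos : (0 < #|{ffun I -> 'I_m}|)%N by apply: card_pos [ffun _ => Ordinal hm].
rewrite (@Eu_ext _ _ (fun h => (\sum_i a i * b i) ^+ 2 + \sum_i \sum_j
   ((i != j)%:R * (a i ^+ 2 * b j ^+ 2 + a i * b i * (a j * b j))) * cc h i j)); last first.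
  move=> h; rewrite ES_sq; congr (_ ^+ 2 + _).
    by apply: eq_bigr => i _; rewrite /cc eqxx mulr1.
  apply: eq_bigr => i _; apply: eq_bigr => j _.
  rewrite /cc (eq_sym (h j)); case: (h i == h j) => /=; ring.
rewrite EuD Eu_const // Eu_sum mulr_sumr; congr (_ + _); apply: eq_bigr => i _.
rewrite Eu_sum mulr_sumr; apply: eq_bigr => j _.
rewrite EuZ; case: (eqVneq i j) => [<-|hij]; first by rewrite !mul0r mulr0.
by rewrite EH //; ring.
Qed.

End Gen.

Section X.
Variable R : realFieldType.
Variables (D b k m : nat).
Local Notation N := (2 ^ b * k)%N.

Definition ee (pis : {ffun 'I_k -> {perm 'I_D}}) (S : {set 'I_D}) (j : 'I_k) : nat :=
  (j * 2 ^ b + lowbits b (minperm (pis j) S))%N.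

Lemma lowbits_lt v : (lowbits b v < 2 ^ b)%N.
Proof. by rewrite /lowbits ltn_pmod // expn_gt0. Qed.

Lemma ee_lt (pis : {ffun 'I_k -> {perm 'I_D}}) (S : {set 'I_D}) j : (ee pis S j < N)%N.
Proof.
rewrite /ee; have := lowbits_lt (minperm (pis j) S); have := ltn_ord j.
move: (lowbits _ _) (2 ^ b)%N (nat_of_ord j) => x p jj; nia.
Qed.

Lemma ee_div pis S j : (ee pis S j %/ 2 ^ b)%N = j.
Proof. by rewrite /ee divnMDl ?expn_gt0 // divn_small ?addn0 // lowbits_lt. Qed.

Lemma ee_mod pis S j : (ee pis S j %% 2 ^ b)%N = lowbits b (minperm (pis j) S).
Proof. by rewrite /ee modnMDl modn_small // lowbits_lt. Qed.

Lemma ee_inj pis S S' j j' : ee pis S j = ee pis S' j' -> j = j'.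
Proof. by move=> e; apply: val_inj; rewrite /= -(ee_div pis S j) e ee_div. Qed.

Lemma sum_ind (x : nat) : (x < N)%N -> \sum_(i < N) ((i : nat) == x)%:R = 1 :> R.
Proof.
move=> hx; rewrite (bigD1 (Ordinal hx)) //= eqxx big1 ?addr0 // => i hi.
case: eqP => // e; exfalso; move/eqP: hi; apply; exact: val_inj.
Qed.

Lemma sum_ind2 (x y : nat) : (x < N)%N ->
  \sum_(i < N) ((i : nat) == x)%:R * ((i : nat) == y)%:R = (x == y)%:R :> R.
Proof.
move=> hx; rewrite (bigD1 (Ordinal hx)) //= eqxx mul1r big1 ?addr0 // => i hi.
case: eqP => [e|]; last by rewrite mul0r.
exfalso; move/eqP: hi; apply; exact: val_inj.
Qed.

Lemma xvec_sum (pis : {ffun 'I_k -> {perm 'I_D}}) (S : {set 'I_D}) (i : 'I_N) :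
  xvec R pis S i = \sum_j ((i : nat) == ee pis S j)%:R.
Proof.
rewrite /xvec; case: existsP => [[j0 /eqP hj0]|hn].
  have hj0' : (i : nat) = ee pis S j0 := hj0.
  rewrite (bigD1 j0) //= hj0' eqxx big1 ?addr0 // => j hj.
  case: eqP => // e; exfalso; move/eqP: hj; apply.
  exact: (ee_inj (esym e)).
rewrite big1 // => j _; case: eqP => // e; exfalso; apply: hn; exists j; exact/eqP.
Qed.

Lemma xvec_bin (pis : {ffun 'I_k -> {perm 'I_D}}) (S : {set 'I_D}) (i : 'I_N) : xvec R pis S i * xvec R pis S i = xvec R pis S i.
Proof. by rewrite /xvec; case: [exists _, _]; rewrite /= ?mulr1 ?mulr0. Qed.

Lemma sum_xvec (pis : {ffun 'I_k -> {perm 'I_D}}) (S : {set 'I_D}) : \sum_(i < N) xvec R pis S i = k%:R.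
Proof.
rewrite (eq_bigr _ (fun i _ => xvec_sum pis S i)) exchange_big /=.
rewrite (eq_bigr (fun _ => 1)) ?sumr_const ?card_ord // => j _; exact: sum_ind (ee_lt _ _ _).
Qed.

Definition Yb (S1 S2 : {set 'I_D}) (p : {perm 'I_D}) : R :=
  (lowbits b (minperm p S1) == lowbits b (minperm p S2))%:R.

Lemma dot_xvec (pis : {ffun 'I_k -> {perm 'I_D}}) (S1 S2 : {set 'I_D}) :
  \sum_(i < N) xvec R pis S1 i * xvec R pis S2 i = \sum_j Yb S1 S2 (pis j).
Proof.
rewrite (eq_bigr (fun i : 'I_N => \sum_j \sum_j'
   ((i : nat) == ee pis S1 j)%:R * ((i : nat) == ee pis S2 j')%:R)); last first.
  move=> i _; rewrite !xvec_sum mulr_suml; apply: eq_bigr => j _; by rewrite mulr_sumr.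
rewrite exchange_big /=; apply: eq_bigr => j _.
rewrite exchange_big /= (eq_bigr (fun j' => (ee pis S1 j == ee pis S2 j')%:R)); last first.
  by move=> j' _; rewrite sum_ind2 // ee_lt.
rewrite (bigD1 j) //= big1 ?addr0.
  by rewrite /Yb /ee eqn_add2l.
move=> j' hj'; case: eqP => // e; exfalso; move/eqP: hj'; apply.
by apply: esym; apply: ee_inj e.
Qed.

End X.

Section P.
Variable R : realFieldType.

Lemma sum_prod2 (I : finType) (F G : I -> R) :
  \sum_i \sum_j F i * G j = (\sum_i F i) * (\sum_j G j).
Proof. by rewrite mulr_suml; apply: eq_bigr => i _; rewrite mulr_sumr. Qed.

Lemma tail_bin (I : finType) (a b : I -> R) (ha : forall i, a i * a i = a i)
  (hb : forall i, b i * b i = b i) :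
  \sum_i \sum_j (i != j)%:R * (a i ^+ 2 * b j ^+ 2 + a i * b i * (a j * b j))
  = (\sum_i a i) * (\sum_i b i) + (\sum_i a i * b i) ^+ 2 - 2 * \sum_i a i * b i.
Proof.
rewrite offdiag.
rewrite (eq_bigr (fun i => \sum_j (a i * b j + (a i * b i) * (a j * b j)))); last first.
  by move=> i _; apply: eq_bigr => j _; rewrite !expr2 ha hb.
have -> : \sum_i (a i ^+ 2 * b i ^+ 2 + a i * b i * (a i * b i)) = 2 * \sum_i a i * b i.
  rewrite mulr_sumr; apply: eq_bigr => i _; rewrite !expr2 ha hb.
  have -> : a i * b i * (a i * b i) = a i * b i by rewrite mulrACA ha hb.
  ring.
rewrite (eq_bigr (fun i => \sum_j a i * b j + \sum_j (a i * b i) * (a j * b j))); last first.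
  by move=> i _; rewrite big_split.
rewrite big_split /= !sum_prod2 expr2; ring.
Qed.

Lemma EP1 (J : finType) (k : nat) (hJ : (0 < #|J|)%N) (Y : J -> R) :
  Eu (fun pis : {ffun 'I_k -> J} => \sum_j Y (pis j)) = k%:R * Eu Y.
Proof.
rewrite Eu_sum (eq_bigr (fun _ => Eu Y)) ?sumr_const ?card_ord ?mulr_natl //.
by move=> j _; rewrite Eu_marg1.
Qed.

Lemma EP2 (J : finType) (k : nat) (hJ : (0 < #|J|)%N) (Y : J -> R)
  (hY : forall p, Y p * Y p = Y p) :
  Eu (fun pis : {ffun 'I_k -> J} => (\sum_j Y (pis j)) ^+ 2)
  = k%:R * Eu Y + (k%:R ^+ 2 - k%:R) * Eu Y ^+ 2.
Proof.
rewrite (@Eu_ext _ _ _ (fun pis : {ffun 'I_k -> J} =>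
   \sum_j \sum_j' Y (pis j) * Y (pis j'))); last by move=> pis; rewrite expr2 sum_prod2.
rewrite Eu_sum.
rewrite (eq_bigr (fun j => \sum_(j' < k) (Eu Y ^+ 2 + (j == j')%:R * (Eu Y - Eu Y ^+ 2)))); last first.
  move=> j _; rewrite Eu_sum; apply: eq_bigr => j' _.
  case: (eqVneq j j') => [<-|hjj].
    rewrite (@Eu_ext _ _ _ (fun pis : {ffun 'I_k -> J} => Y (pis j))); last first.
      by move=> pis; rewrite hY.
    rewrite Eu_marg1 //=; ring.
  rewrite (@Eu_marg2 R _ _ hJ j j' Y Y hjj) /=; ring.
rewrite (eq_bigr (fun _ => k%:R * Eu Y ^+ 2 + (Eu Y - Eu Y ^+ 2))); last first.
  by move=> j _; rewrite big_split /= sum_delta sumr_const card_ord mulr_natl.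
rewrite sumr_const card_ord -mulr_natl; ring.
Qed.

End P.

Section Main.
Variable R : realFieldType.
Variables (D b k m : nat).
Local Notation N := (2 ^ b * k)%N.

Lemma That_eq (S1 S2 : {set 'I_D}) (w : Omega D b k m) :
  That R S1 S2 w = \sum_(i < N) \sum_(j < N)
     (xvec R w.1.1 S1 i * xvec R w.1.1 S2 j * cc R w.1.2 i j)
     * (sgn R (w.2 i) * sgn R (w.2 j)).
Proof.
rewrite /That /gvw.
rewrite (eq_bigr (fun q => \sum_(i < N) \sum_(j < N)
   (xvec R w.1.1 S1 i * sgn R (w.2 i) * (w.1.2 i == q)%:R) *
   (xvec R w.1.1 S2 j * sgn R (w.2 j) * (w.1.2 j == q)%:R))); last first.
  by move=> q _; rewrite mulr_suml; apply: eq_bigr => i _; rewrite mulr_sumr.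
rewrite exchange_big; apply: eq_bigr => i _ /=.
rewrite exchange_big; apply: eq_bigr => j _ /=.
rewrite (bigD1 (w.1.2 i)) //= big1 ?addr0.
  rewrite /cc eqxx (eq_sym (w.1.2 j)). rewrite mulr1; ring.
by move=> q hq; rewrite eq_sym (negbTE hq) mulr0 mul0r.
Qed.

End Main.

Lemma Varu_ext (R : realFieldType) (T : finType) (f g : T -> R) : f =1 g -> Varu f = Varu g.
Proof.
move=> e; rewrite /Varu (Eu_ext e); apply: Eu_ext => w; by rewrite e.
Qed.

Theorem lemma2 (R : realFieldType) (D b k m : nat) (S1 S2 : {set 'I_D})
  (hS1 : S1 != set0) (hS2 : S2 != set0)
  (hb : (1 <= b)%N) (hk : (1 <= k)%N) (hm : (1 <= m)%N)
  (hC2 : C2b b (#|S1|%:R / D%:R : R) (#|S2|%:R / D%:R) != 1)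
  (hPb : Pb R b S1 S2 =
         C1b b (#|S1|%:R / D%:R) (#|S2|%:R / D%:R)
         + (1 - C2b b (#|S1|%:R / D%:R) (#|S2|%:R / D%:R)) * resemblance R S1 S2) :
  let r1 : R := #|S1|%:R / D%:R in
  let r2 : R := #|S2|%:R / D%:R in
  let P := Pb R b S1 S2 in
  let C2 := C2b b r1 r2 in
  Eu (@Rhat_vw R D b k m S1 S2) = resemblance R S1 S2 /\
  Varu (@Rhat_vw R D b k m S1 S2) =
    k%:R^-1 * (P * (1 - P) / (1 - C2) ^+ 2)
    + m%:R^-1 * ((1 - C2) ^+ 2)^-1 * (1 + P ^+ 2 - P * (1 + P) / k%:R).
Proof.
move=> r1 r2 P C2.
pose N := (2 ^ b * k)%N.
have posP : (0 < #|{perm 'I_D}|)%N by apply: card_pos 1%g.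
have posO : (0 < #|Omega D b k m|)%N.
  by apply: card_pos (([ffun _ => 1%g], [ffun _ => Ordinal hm]), [ffun _ => false]).
have hP : P = Eu (Yb R b S1 S2) by [].
have YB : forall p, Yb R b S1 S2 p * Yb R b S1 S2 p = Yb R b S1 S2 p.
  by move=> p; rewrite /Yb; case: (_ == _); rewrite /= ?mulr1 ?mulr0.
have EX : Eu (That R S1 S2 : Omega D b k m -> R) = k%:R * P.
  rewrite Eu_pair Eu_pair.
  rewrite (@Eu_ext _ _ _ (fun pis : {ffun 'I_k -> {perm 'I_D}} => \sum_j Yb R b S1 S2 (pis j))).
    by rewrite EP1.
  move=> pis /=.
  rewrite (@Eu_ext _ _ _ (fun h : {ffun 'I_N -> 'I_m} => Eu (fun s : {ffun 'I_N -> bool} =>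
     \sum_i \sum_j (xvec R pis S1 i * xvec R pis S2 j * cc R h i j)
       * (sgn R (s i) * sgn R (s j))))).
    by rewrite EHS1 // dot_xvec.
  by move=> h; apply: Eu_ext => s; rewrite That_eq.
pose T := fun pis : {ffun 'I_k -> {perm 'I_D}} => \sum_j Yb R b S1 S2 (pis j).
have EX2 : Eu (fun w : Omega D b k m => That R S1 S2 w ^+ 2) =
   (1 + m%:R^-1) * (k%:R * P + (k%:R ^+ 2 - k%:R) * P ^+ 2)
   - 2 * m%:R^-1 * (k%:R * P) + m%:R^-1 * k%:R ^+ 2.
  rewrite Eu_pair Eu_pair.
  rewrite (@Eu_ext _ _ _ (fun pis : {ffun 'I_k -> {perm 'I_D}} =>
     (1 + m%:R^-1) * T pis ^+ 2 + (- (2 * m%:R^-1)) * T pis + m%:R^-1 * k%:R ^+ 2)).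
    rewrite !EuD !EuZ Eu_const // ?card_ffun ?expn_gt0 ?posP // /T (EP2 k posP YB) (EP1 k posP) -hP; ring.
  move=> pis /=.
  rewrite (@Eu_ext _ _ _ (fun h : {ffun 'I_N -> 'I_m} => Eu (fun s : {ffun 'I_N -> bool} =>
     (\sum_i \sum_j (xvec R pis S1 i * xvec R pis S2 j * cc R h i j)
       * (sgn R (s i) * sgn R (s j))) ^+ 2))); last first.
    by move=> h; apply: Eu_ext => s; rewrite That_eq.
  rewrite EHS2 // (tail_bin (@xvec_bin R D b k pis S1) (@xvec_bin R D b k pis S2)).
  rewrite !sum_xvec dot_xvec /T; ring.
set C1 := C1b b r1 r2.
have hPb' : P = C1 + (1 - C2) * resemblance R S1 S2 := hPb.
have hk0 : k%:R != 0 :> R by rewrite pnatr_eq0 -lt0n.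
have hm0 : m%:R != 0 :> R by rewrite pnatr_eq0 -lt0n.
have hc : 1 - C2 != 0 by rewrite subr_eq0 eq_sym.
pose al := (k%:R * (1 - C2))^-1.
pose be := - C1 / (1 - C2).
have eR : @Rhat_vw R D b k m S1 S2 =1 (fun w => al * That R S1 S2 w + be).
  move=> w; rewrite /Rhat_vw -/r1 -/r2 -/C2 -/C1 /al /be; field.
  by rewrite hk0 hc.
split.
  rewrite (Eu_ext eR) Eu_aff // EX /al /be hPb'; field.
  by rewrite hk0 hc.
rewrite (Varu_ext eR) Varu_aff // EX2 EX /al; field.
by rewrite hk0 hc hm0.
Qed.
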